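(* Let $m,n\ge2$ and $W$ a channel from $\{1,\dots,m\}$ to $\{1,\dots,n\}$. (i) If $m\le n$, define for each $j$: $\beta'_j=\frac{(\mathbf{1}W)_j-1}{\mathrm{w}(W_{*,j})-1}$ if $\mathrm{w}(W_{*,j})>1$ and $\beta'_j=0$ otherwise, and $\beta=\max(0,\max_j\beta'_j)$. Then $\overline{P}_W(m)\le 1-\beta$, and if $\beta=0$ then $\overline{P}_W(m)=1$. (ii) If $m\ge n$, let $h=\min(1,\min_{1\le j\le n}(\mathbf{1}W)_j)$. Then $\overline{P}_W(n)\le h$, and if $h=1$ then $\overline{P}_W(n)=1$.
   Context: A channel is a row-stochastic matrix; $\mathcal{D}$ is the set of deterministic (0-1) channels from $\{1,\dots,m\}$ to $\{1,\dots,n\}$, $\mathrm{rank}(D)$ the matrix rank. $\Lambda(W)=\{\lambda\text{ probability distribution on }\mathcal{D}: W=\sum_D\lambda_DD\}$, $P_\lambda(r)=\lambda(\{D:\mathrm{rank}(D)=r\})$, $\overline{P}_W(r)=\max_{\lambda\in\Lambda(W)}P_\lambda(r)$. $\mathbf{1}$ is the all-one row vector of length $m$ ($\mathbf{1}W$ = column sums), $W_{*,j}$ is the $j$-th column, and $\mathrm{w}(x)$ is the number of nonzero entries of $x$. *)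

(* Defs.v *)
From HB Require Import structures.
From mathcomp Require Import all_boot all_order all_algebra.
From mathcomp Require Import classical_sets reals.
Set Implicit Arguments. Unset Strict Implicit. Unset Printing Implicit Defensive.
Import Order.TTheory GRing.Theory Num.Theory.
Local Open Scope ring_scope.
Local Open Scope classical_set_scope.

Section Defs.
Variables (R : realType) (m n : nat).

Definition channel (W : 'M[R]_(m, n)) : Prop :=
  (forall i j, 0 <= W i j) /\ (forall i, \sum_(j < n) W i j = 1).

(* deterministic channels are indexed by functions {1..m} -> {1..n} *)
Definition detmx (f : {ffun 'I_m -> 'I_n}) : 'M[R]_(m, n) :=
  \matrix_(i, j) (f i == j)%:R.

Definition in_Lambda (W : 'M[R]_(m, n)) (l : {ffun {ffun 'I_m -> 'I_n} -> R}) : Prop :=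
  (forall f, 0 <= l f) /\ \sum_f l f = 1 /\ W = \sum_f l f *: detmx f.

Definition P_lambda (l : {ffun {ffun 'I_m -> 'I_n} -> R}) (r : nat) : R :=
  \sum_(f | \rank (detmx f) == r) l f.

(* \overline{P}_W(r) = max over Lambda(W) (taken as sup; the max is attained) *)
Definition Pbar (W : 'M[R]_(m, n)) (r : nat) : R :=
  sup [set x | exists l, in_Lambda W l /\ x = P_lambda l r].

Definition colsum (W : 'M[R]_(m, n)) (j : 'I_n) : R := \sum_(i < m) W i j.

Definition colweight (W : 'M[R]_(m, n)) (j : 'I_n) : nat := #|[set i | W i j != 0]|.

Definition beta' (W : 'M[R]_(m, n)) (j : 'I_n) : R :=
  if (1 < colweight W j)%N then (colsum W j - 1) / ((colweight W j)%:R - 1) else 0.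

Definition beta (W : 'M[R]_(m, n)) : R := \big[Num.max/0]_(j < n) beta' W j.

Definition hval (W : 'M[R]_(m, n)) : R := \big[Num.min/1]_(j < n) colsum W j.

End Defs.

(* Main.v *)
Require Import Defs.
From HB Require Import structures.
From mathcomp Require Import all_boot all_order all_algebra.
From mathcomp Require Import classical_sets reals.
From mathcomp Require Import ring lra zify.
Import Order.TTheory GRing.Theory Num.Theory.
Local Open Scope ring_scope.


Lemma sum_ge2 {R : realType} {T : finType} (x : T -> R) a b :
  (forall t, 0 <= x t) -> a != b -> x a + x b <= \sum_t x t.
Proof.
move=> x0 ab; rewrite (bigD1 a) //= (bigD1 b) /=; last by rewrite eq_sym.
rewrite addrA lerDl; apply: sumr_ge0 => t _; exact: x0.
Qed.

Lemma two_frac {R : realType} {T : finType} (x : T -> R) t0 :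
  (forall t, 0 <= x t <= 1) -> \sum_t x t = 1 -> 0 < x t0 < 1 ->
  exists t1, t1 != t0 /\ 0 < x t1 < 1.
Proof.
move=> x01 s1 /andP[x0 x1].
have x0' t : 0 <= x t by case/andP: (x01 t).
case: (boolP [exists t, (t != t0) && (0 < x t < 1)]).
  by case/existsP => t /andP[H1 H2]; exists t.
rewrite negb_exists => /forallP H.
case: (boolP [exists t, (t != t0) && (x t == 1)]).
  case/existsP => t /andP[tt0 /eqP xt1].
  have := @sum_ge2 _ _ x t t0 x0' tt0; rewrite s1 xt1 => H2.
  lra.
rewrite negb_exists => /forallP H'.
have : \sum_t x t = x t0.
  rewrite (bigD1 t0) //= big1 ?addr0 // => t tt0.
  have := H t; have := H' t; rewrite tt0 /= => /eqP n1 /negP n2.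
  case/andP: (x01 t) => a b.
  apply/eqP; rewrite eq_le a andbT leNgt; apply/negP => pos.
  apply: n2; rewrite pos /= lt_neqAle b andbT; exact/eqP.
by rewrite s1 => e; move: x1; rewrite -e ltxx.
Qed.
Lemma kernel_lemma {R : realType} {X Y : finType} (F : {set X}) (C : {set Y})
  (touch : X -> Y -> bool) :
  (#|C| < #|F|)%N ->
  exists e : X -> R, (exists x, e x != 0) /\ (forall x, x \notin F -> e x = 0) /\
    (forall y, y \in C -> \sum_x e x * (touch x y)%:R = 0).
Proof.
move=> lt.
pose A : 'M[R]_(#|F|, #|C|) := \matrix_(k, l) (touch (enum_val k) (enum_val l))%:R.
have rk : (0 < \rank (kermx A))%N.
  by rewrite mxrank_ker subn_gt0; apply: leq_ltn_trans (rank_leq_col A) lt.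
have : kermx A != 0 by rewrite -mxrank_eq0 -lt0n.
case/matrix0Pn => k0 [l0 nz].
pose u := row k0 (kermx A).
have uA : u *m A = 0 by rewrite /u -row_mul mulmx_ker row0.
pose e x := \sum_k (enum_val k == x)%:R * u 0 k.
exists e; split.
  exists (enum_val l0); rewrite /e (bigD1 l0) //= eqxx mul1r big1 ?addr0.
    by rewrite mxE.
  by move=> k kl; rewrite (inj_eq enum_val_inj) (negbTE kl) mul0r.
split.
  move=> x xF; rewrite /e big1 // => k _.
  case: eqP => [ek|]; last by rewrite mul0r.
  by move: (enum_valP k); rewrite ek (negbTE xF).
move=> y yC.
have := congr1 (fun M : 'M[R]_(1, #|C|) => M 0 (enum_rank_in yC y)) uA.
rewrite !mxE => H; rewrite -[RHS]H /e.
under eq_bigr do rewrite mulr_suml.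
rewrite exchange_big /=; apply: eq_bigr => k _.
rewrite (bigD1 (enum_val k)) //= eqxx mul1r big1 ?addr0.
  by rewrite !mxE enum_rankK_in.
by move=> x /negbTE xk; rewrite eq_sym xk mul0r mul0r.
Qed.
Lemma detmx_mull {R : realType} {m n p : nat} (f : {ffun 'I_m -> 'I_n}) (B : 'M[R]_(n, p)) i k :
  (detmx R f *m B) i k = B (f i) k.
Proof.
rewrite mxE (bigD1 (f i)) //= mxE eqxx mul1r big1 ?addr0 // => j /negbTE.
by rewrite mxE eq_sym => ->; rewrite mul0r.
Qed.

Lemma rank_m_inj {R : realType} {m n : nat} (f : {ffun 'I_m -> 'I_n}) :
  \rank (detmx R f) = m -> injective f.
Proof.
move=> H; have : row_free (detmx R f) by rewrite /row_free H.
case/row_freeP => B AB i i' e; apply/eqP; apply: contraT => ne.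
have h1 := congr1 (fun M : 'M[R]_m => M i i') AB.
have h2 := congr1 (fun M : 'M[R]_m => M i' i') AB.
move: h1 h2; rewrite /= !detmx_mull e !mxE eqxx (negbTE ne) => -> /eqP.
by rewrite eq_sym oner_eq0.
Qed.

Lemma inj_rank_m {R : realType} {m n : nat} (f : {ffun 'I_m -> 'I_n}) :
  injective f -> \rank (detmx R f) = m.
Proof.
move=> inj; apply/eqP; apply/row_freeP; exists (detmx R f)^T.
by apply/matrixP => i k; rewrite detmx_mull !mxE (inj_eq inj) eq_sym.
Qed.

Lemma rank_n_surj {R : realType} {m n : nat} (f : {ffun 'I_m -> 'I_n}) :
  \rank (detmx R f) = n -> forall j, exists i, f i = j.
Proof.
move=> H; have : row_full (detmx R f) by rewrite /row_full H.
case/row_fullP => B BA j.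
case: (boolP [exists i, f i == j]) => [/existsP [i /eqP <-]|]; first by exists i.
rewrite negb_exists => /forallP nex.
have := congr1 (fun M : 'M[R]_n => M j j) BA; rewrite /= !mxE eqxx big1.
  by move/eqP; rewrite eq_sym oner_eq0.
by move=> i _; rewrite mxE (negbTE (nex i)) mulr0.
Qed.

Lemma surj_rank_n {R : realType} {m n : nat} (f : {ffun 'I_m -> 'I_n}) :
  (forall j, exists i, f i = j) -> \rank (detmx R f) = n.
Proof.
move=> /fin_all_exists [g fg]; apply/eqP; apply/row_fullP.
exists (\matrix_(j, i) (g j == i)%:R); apply/matrixP => j k.
rewrite !mxE (bigD1 (g j)) //= !mxE eqxx mul1r fg big1 ?addr0 //.
by move=> i /negbTE; rewrite mxE eq_sym => ->; rewrite mul0r.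
Qed.

Lemma card_sumb {T : finType} (A : {set T}) : #|A| = (\sum_x (x \in A))%N.
Proof. by rewrite -sum1_card big_mkcond /=; apply: eq_bigr => x _; case: (x \in A). Qed.

Lemma sum_pair_row {R : realType} {m n : nat} (e : 'I_m * 'I_n -> R) i :
  \sum_x e x * (x.1 == i)%:R = \sum_j e (i, j).
Proof.
transitivity (\sum_a \sum_b e (a, b) * (a == i)%:R).
  by rewrite pair_big; apply: eq_bigr => -[a b].
rewrite (bigD1 i) //= [X in _ + X]big1 ?addr0.
  by apply: eq_bigr => j _; rewrite eqxx mulr1.
by move=> a /negbTE ai; rewrite big1 // => b _; rewrite ai mulr0.
Qed.

Lemma sum_pair_col {R : realType} {m n : nat} (e : 'I_m * 'I_n -> R) j :
  \sum_x e x * (x.2 == j)%:R = \sum_i e (i, j).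
Proof.
transitivity (\sum_a \sum_b e (a, b) * (b == j)%:R).
  by rewrite pair_big; apply: eq_bigr => -[a b].
apply: eq_bigr => a _.
rewrite (bigD1 j) //= [X in _ + X]big1 ?addr0; first by rewrite eqxx mulr1.
by move=> b /negbTE bj; rewrite bj mulr0.
Qed.

Lemma E_from_C {R : realType} {m n : nat} (F : {set 'I_m * 'I_n})
  (Rs : {set 'I_m}) (Cs : {set 'I_n}) :
  (#|Rs| + #|Cs| < #|F|)%N ->
  exists E : 'M[R]_(m, n), (exists i j, E i j != 0) /\
    (forall i j, (i, j) \notin F -> E i j = 0) /\
    (forall i, i \in Rs -> \sum_j E i j = 0) /\
    (forall j, j \in Cs -> \sum_i E i j = 0).
Proof.
move=> lt.
pose C : {set 'I_m + 'I_n} :=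
  [set y | match y with inl i => i \in Rs | inr j => j \in Cs end].
have cC : #|C| = (#|Rs| + #|Cs|)%N.
  by rewrite card_sumb big_sumType /= !card_sumb; congr (_ + _)%N;
     apply: eq_bigr => x _; rewrite inE.
pose touch (x : 'I_m * 'I_n) (y : 'I_m + 'I_n) :=
  match y with inl i => x.1 == i | inr j => x.2 == j end.
have lt' : (#|C| < #|F|)%N by rewrite cC.
have [e [[x ex] [eF eC]]] := @kernel_lemma R _ _ F C touch lt'.
exists (\matrix_(i, j) e (i, j)); split.
  by exists x.1, x.2; rewrite mxE; case: x ex.
split; first by move=> i j ijF; rewrite mxE eF.
split.
  move=> i iR; have := eC (inl i); rewrite inE => /(_ iR) /=.
  rewrite sum_pair_row => H.
  by rewrite -[RHS]H; apply: eq_bigr => j _; rewrite mxE.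
move=> j jC; have := eC (inr j); rewrite inE => /(_ jC) /=.
rewrite sum_pair_col => H.
by rewrite -[RHS]H; apply: eq_bigr => i _; rewrite mxE.
Qed.

Definition feas {R : realType} {m n : nat} (K : {set 'I_n}) (s : R)
  (W : 'M[R]_(m, n)) : Prop :=
  (forall i j, 0 <= W i j) /\ (forall i, \sum_j W i j = 1) /\
  (forall j, j \in K -> s * (colsum W j - 1) <= 0).

Definition Fr {R : realType} {m n : nat} (W : 'M[R]_(m, n)) : {set 'I_m * 'I_n} :=
  [set x | 0 < W x.1 x.2 < 1].

Lemma feas_le1 {R : realType} {m n : nat} K (s : R) (W : 'M[R]_(m, n)) i j :
  feas K s W -> W i j <= 1.
Proof.
case=> W0 [Wr _]; rewrite -(Wr i) (bigD1 j) //= lerDl.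
by apply: sumr_ge0 => k _.
Qed.

Lemma findE {R : realType} {m n : nat} K (s : R) (W : 'M[R]_(m, n)) :
  feas K s W -> Fr W != finset.set0 ->
  exists E : 'M[R]_(m, n), (exists i j, E i j != 0) /\
    (forall i j, (i, j) \notin Fr W -> E i j = 0) /\
    (forall i, \sum_j E i j = 0) /\
    (forall j, j \in K -> colsum W j = 1 -> colsum E j = 0).
Proof.
move=> fW Fne; have [W0 [Wr WK]] := fW.
set F := Fr W.
have W01 i j : 0 <= W i j <= 1 by rewrite W0 (@feas_le1 _ _ _ K s W i j fW).
have inF i j : ((i, j) \in F) = (0 < W i j < 1) by rewrite inE.
pose RF := [set i | [exists j, (i, j) \in F]].
pose TF := [set j | [&& j \in K, colsum W j == 1 & [exists i, (i, j) \in F]]].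
have degr i : i \in RF -> (2 <= #|[set j | (i, j) \in F]|)%N.
  rewrite inE => /existsP [j0]; rewrite inF => Fj0.
  have [j1 [j10 Fj1]] := @two_frac R _ (fun j => W i j) j0 (W01 i) (Wr i) Fj0.
  apply: leq_trans (_ : (2 <= #|[set j1; j0]|)%N) _; first by rewrite cards2 j10.
  apply: subset_leq_card; apply/fintype.subsetP => j.
  by rewrite !inE => /orP[/eqP->|/eqP->].
have degc j : j \in TF -> (2 <= #|[set i | (i, j) \in F]|)%N.
  rewrite inE => /and3P [_ /eqP c1 /existsP [i0]]; rewrite inF => Fi0.
  have [i1 [i10 Fi1]] := @two_frac R _ (fun i => W i j) i0 (fun i => W01 i j) c1 Fi0.
  apply: leq_trans (_ : (2 <= #|[set i1; i0]|)%N) _; first by rewrite cards2 i10.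
  apply: subset_leq_card; apply/fintype.subsetP => i.
  by rewrite !inE => /orP[/eqP->|/eqP->].
have cF1 : #|F| = (\sum_i #|[set j | (i, j) \in F]|)%N.
  transitivity (\sum_i \sum_j ((i, j) \in F) : nat)%N.
    by rewrite card_sumb pair_big; apply: eq_bigr => -[a b].
  by apply: eq_bigr => i _; rewrite card_sumb; apply: eq_bigr => j _; rewrite inE.
have cF2 : #|F| = (\sum_j #|[set i | (i, j) \in F]|)%N.
  transitivity (\sum_i \sum_j ((i, j) \in F) : nat)%N.
    by rewrite card_sumb pair_big; apply: eq_bigr => -[a b].
  rewrite exchange_big /=.
  by apply: eq_bigr => j _; rewrite card_sumb; apply: eq_bigr => i _; rewrite inE.
have h1 : (2 * #|RF| <= #|F|)%N.
  rewrite cF1 card_sumb big_distrr /=; apply: leq_sum => i _.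
  by case: (boolP (i \in RF)) => iR; [rewrite muln1; apply: degr | rewrite muln0].
pose N := (\sum_j (j \notin TF) * #|[set i | (i, j) \in F]|)%N.
have h2 : (2 * #|TF| + N <= #|F|)%N.
  rewrite cF2 card_sumb big_distrr -big_split /=; apply: leq_sum => j _.
  case: (boolP (j \in TF)) => jT /=.
    by rewrite muln1 mul0n addn0; apply: degc.
  by rewrite muln0 mul1n add0n.
have rowfix (E : 'M[R]_(m, n)) : (forall i j, (i, j) \notin F -> E i j = 0) ->
    (forall i, i \in RF -> \sum_j E i j = 0) -> forall i, \sum_j E i j = 0.
  move=> sE rE i; case: (boolP (i \in RF)) => iR; first exact: rE.
  apply: big1 => j _; apply: sE; apply: contra iR => ijF.
  by rewrite inE; apply/existsP; exists j.
have colfix (E : 'M[R]_(m, n)) : (forall i j, (i, j) \notin F -> E i j = 0) ->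
    forall j, ~~ [exists i, (i, j) \in F] -> colsum E j = 0.
  move=> sE j nj; apply: big1 => i _; apply: sE; apply: contra nj => ijF.
  by apply/existsP; exists i.
case: (posnP N) h2 => [N0|Npos] h2.
  have allT i j : (i, j) \in F -> j \in TF.
    move=> ijF; apply: contraT => jT.
    have : (0 < N)%N.
      rewrite /N (bigD1 j) //= jT mul1n; apply: leq_trans (leq_addr _ _).
      by rewrite card_gt0; apply/set0Pn; exists i; rewrite inE.
    by rewrite N0.
  case/set0Pn: Fne => -[i0 j0] x0F.
  have j0T := allT _ _ x0F.
  have cD := cardsD1 j0 TF; rewrite j0T /= add1n in cD.
  rewrite N0 addn0 in h2.
  have lt : (#|RF| + #|TF :\ j0| < #|F|)%N.
    move: h1 h2 cD; move: #|RF| #|TF| #|TF :\ j0| #|F| => a b c d; lia.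
  have [E [nz [sE [rE cE]]]] := @E_from_C R m n F RF (TF :\ j0) lt.
  have rows := rowfix E sE rE.
  have cols j : j != j0 -> colsum E j = 0.
    move=> jj0; case: (boolP (j \in TF)) => jT.
      by rewrite /colsum; apply: cE; rewrite in_setD1 jj0 jT.
    apply: colfix => //; rewrite negb_exists; apply/forallP => i.
    by apply: contra jT; apply: allT.
  exists E; split => //; split => //; split => // j _ _.
  case: (eqVneq j j0) => [->|jj0]; last exact: cols.
  have tot : \sum_j colsum E j = 0.
    by rewrite /colsum exchange_big /= big1 // => i _; apply: rows.
  by move: tot; rewrite (bigD1 j0) //= big1 ?addr0 // => k; apply: cols.
have lt : (#|RF| + #|TF| < #|F|)%N by lia.
have [E [nz [sE [rE cE]]]] := @E_from_C R m n F RF TF lt.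
exists E; split => //; split => //; split; first exact: rowfix.
move=> j jK /eqP c1; case: (boolP [exists i, (i, j) \in F]) => ex.
  by rewrite /colsum; apply: cE; rewrite inE jK c1 ex.
exact: colfix.
Qed.

Definition NT {R : realType} {m n : nat} (K : {set 'I_n}) (W : 'M[R]_(m, n)) : {set 'I_n} :=
  [set j in K | colsum W j != 1].

Definition mu {R : realType} {m n : nat} (K : {set 'I_n}) (W : 'M[R]_(m, n)) : nat :=
  (#|Fr W| + #|NT K W|)%N.

Lemma colsum_lin {R : realType} {m n : nat} (W E : 'M[R]_(m, n)) (a : R) j :
  colsum (W + a *: E) j = colsum W j + a * colsum E j.
Proof.
by rewrite /colsum mulr_sumr -big_split; apply: eq_bigr => i _; rewrite !mxE.
Qed.

Lemma LS {R : realType} {m n : nat} K (s : R) (W E : 'M[R]_(m, n)) :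
  s != 0 -> feas K s W ->
  (exists i j, E i j != 0) ->
  (forall i j, (i, j) \notin Fr W -> E i j = 0) ->
  (forall i, \sum_j E i j = 0) ->
  (forall j, j \in K -> colsum W j = 1 -> colsum E j = 0) ->
  exists a, 0 < a /\ feas K s (W + a *: E) /\ (mu K (W + a *: E) < mu K W)%N.
Proof.
move=> s0 fW [i0 [j0 nz]] sE rE cE; have [W0 [Wr WK]] := fW.
pose lim (y : ('I_m * 'I_n + 'I_n)%type) : bool :=
  match y with inl x => E x.1 x.2 < 0 | inr j => (j \in K) && (0 < s * colsum E j) end.
pose rat (y : ('I_m * 'I_n + 'I_n)%type) : R :=
  match y with inl x => W x.1 x.2 / - E x.1 x.2
  | inr j => s * (1 - colsum W j) / (s * colsum E j) end.
have [j1 Ej1] : exists j, E i0 j < 0.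
  case: (boolP [exists j, E i0 j < 0]) => [/existsP [j Ej]|]; first by exists j.
  rewrite negb_exists => /forallP H.
  have := @psumr_eq0P R _ xpredT (fun j => E i0 j); rewrite rE => /(_ _ erefl j0).
  by move=> h; move: nz; rewrite h ?eqxx // => j _; rewrite leNgt H.
have ly0 : lim (inl (i0, j1)) by [].
have [y ly ymin] := @arg_minP _ _ _ (inl (i0, j1)) lim rat ly0.
have inFr i j : E i j != 0 -> (i, j) \in Fr W.
  by move=> nz'; apply: contraT => nF; move: nz'; rewrite sE ?eqxx.
have tightE j : j \in K -> colsum E j != 0 -> colsum W j != 1.
  by move=> jK; apply: contra => /eqP c1; rewrite cE.
have apos : 0 < rat y.
  case: y ly {ymin} => [[i j]|j] /= ly.
    have : (i, j) \in Fr W by apply: inFr; rewrite lt_eqF.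
    rewrite inE /= => /andP [Wp _].
    by apply: divr_gt0 => //; rewrite oppr_gt0.
  case/andP: ly => jK se.
  have c1 : colsum W j != 1.
    by apply: tightE => //; apply: contraTneq se => ->; rewrite mulr0 ltxx.
  apply: divr_gt0 => //.
  have := WK j jK; rewrite lt_neqAle => h; apply/andP; split; last by lra.
  rewrite eq_sym mulf_neq0 // subr_eq0 eq_sym //.
have gen a : 0 < a -> (forall y, lim y -> a <= rat y) ->
    [/\ feas K s (W + a *: E), Fr (W + a *: E) \subset Fr W &
       NT K (W + a *: E) \subset NT K W].
  move=> ap amin; split.
  - split; [|split].
    + move=> i j; rewrite !mxE; case: (ltP (E i j) 0) => Eij.
        have := amin (inl (i, j)) Eij; rewrite /= ler_pdivlMr ?oppr_gt0 // => h.
        nra.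
      by rewrite addr_ge0 // mulr_ge0 // ltW.
    + move=> i; rewrite (eq_bigr (fun j => W i j + a * E i j)) => [|j _]; last by rewrite !mxE.
      by rewrite big_split /= -mulr_sumr Wr rE mulr0 addr0.
    + move=> j jK; rewrite colsum_lin; case: (boolP (0 < s * colsum E j)) => se.
        have := amin (inr j); rewrite /= jK se => /(_ erefl).
        rewrite ler_pdivlMr // => h; nra.
      have := WK j jK; move: se; rewrite -leNgt => se h; nra.
  - apply/fintype.subsetP => -[i j]; apply: contraTT => nF.
    have e := sE i j nF; move: nF; rewrite !inE /= !mxE e mulr0 addr0; exact: id.
  - apply/fintype.subsetP => j; rewrite !inE colsum_lin => /andP [jK ne].
    rewrite jK /=; apply: contra ne => /eqP c1.
    by rewrite (cE j jK c1) c1 mulr0 addr0.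
have strict : (#|Fr (W + rat y *: E)| < #|Fr W|)%N \/ (#|NT K (W + rat y *: E)| < #|NT K W|)%N.
  have [_ s1 s2] := gen _ apos ymin.
  case: y ly {ymin apos} s1 s2 => [[i j]|j] /= ly s1 s2.
    left; apply: proper_card; apply/properP; split => //; exists (i, j).
      by apply: inFr; rewrite lt_eqF.
    have En : E i j != 0 by rewrite lt_eqF.
    have h : W i j + W i j / - E i j * E i j = 0.
      by rewrite mulrAC invrN mulrN mulfK // subrr.
    by rewrite !inE /= !mxE h ltxx.
  right; apply: proper_card; apply/properP; split => //; exists j.
    case/andP: ly => jK se; rewrite inE jK /=; apply: tightE => //.
    by apply: contraTneq se => ->; rewrite mulr0 ltxx.
  case/andP: ly => jK se; rewrite !inE jK /= colsum_lin negbK.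
  have en : colsum E j != 0 by apply: contraTneq se => ->; rewrite mulr0 ltxx.
  have -> : colsum W j + s * (1 - colsum W j) / (s * colsum E j) * colsum E j = 1.
    by field; rewrite s0 en.
  by rewrite eqxx.
exists (rat y); have [f1 s1 s2] := gen _ apos ymin; split => //; split => //.
rewrite /mu; move: (subset_leq_card s1) (subset_leq_card s2) strict.
move: #|Fr _| #|Fr W| #|NT K _| #|NT K W| => a b c d; lia.
Qed.

Lemma base_det {R : realType} {m n : nat} K (s : R) (W : 'M[R]_(m, n)) :
  feas K s W -> Fr W = finset.set0 -> exists f : {ffun 'I_m -> 'I_n}, W = detmx R f.
Proof.
move=> fW F0; have [W0 [Wr _]] := fW.
have one i j : W i j != 0 -> W i j = 1.
  move=> nz; have : (i, j) \notin Fr W by rewrite F0 finset.in_set0.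
  rewrite inE /= negb_and -!leNgt => /orP [h|h].
    by move: nz; rewrite (_ : W i j = 0) ?eqxx //; apply/eqP; rewrite eq_le h W0.
  by apply/eqP; rewrite eq_le h (@feas_le1 _ _ _ K s W i j fW).
have ex i : exists j, W i j != 0.
  case: (boolP [exists j, W i j != 0]) => [/existsP//|].
  rewrite negb_exists => /forallP H.
  have := Wr i; rewrite big1; last by move=> j _; move: (H j); rewrite negbK => /eqP.
  by move/eqP; rewrite eq_sym oner_eq0.
have [g gP] := fin_all_exists ex.
exists (finfun g); apply/matrixP => i j; rewrite !mxE ffunE.
case: (eqVneq (g i) j) => [<-|ne]; first by rewrite (one _ _ (gP i)).
case: (eqVneq (W i j) 0) => // nz.
have h1 := one _ _ nz; have h2 := one _ _ (gP i).
have := @sum_ge2 R _ (fun j => W i j) (g i) j (W0 i) ne.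
rewrite /= Wr h1 h2 => h; lra.
Qed.

Lemma det_decomp {R : realType} {m n : nat} (f : {ffun 'I_m -> 'I_n}) :
  exists l, in_Lambda (detmx R f) l /\ forall g, l g != 0 -> g = f.
Proof.
exists [ffun g => (g == f)%:R]; split; last first.
  move=> g; rewrite ffunE; case: (eqVneq g f) => // ne; by rewrite eqxx.
split; [|split].
- by move=> g; rewrite ffunE ler0n.
- rewrite (bigD1 f) //= ffunE eqxx big1 ?addr0 // => g /negbTE.
  by rewrite ffunE => ->.
- rewrite (bigD1 f) //= ffunE eqxx scale1r big1 ?addr0 // => g /negbTE.
  by rewrite ffunE => ->; rewrite scale0r.
Qed.

Lemma comb {R : realType} {m n : nat} (a b : R) (V1 V2 : 'M[R]_(m, n)) l1 l2 :
  0 <= a -> 0 <= b -> a + b = 1 -> in_Lambda V1 l1 -> in_Lambda V2 l2 ->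
  in_Lambda (a *: V1 + b *: V2) [ffun f => a * l1 f + b * l2 f].
Proof.
move=> a0 b0 ab [p1 [s1 e1]] [p2 [s2 e2]]; split; [|split].
- by move=> f; rewrite ffunE addr_ge0 // mulr_ge0.
- rewrite (eq_bigr (fun f => a * l1 f + b * l2 f)) => [|f _]; last by rewrite ffunE.
  by rewrite big_split /= -!mulr_sumr s1 s2 !mulr1.
- rewrite e1 e2 !scaler_sumr -big_split /=; apply: eq_bigr => f _.
  by rewrite ffunE scalerDl !scalerA.
Qed.

Lemma DEC {R : realType} {m n : nat} (K : {set 'I_n}) (s : R) :
  s != 0 -> forall W : 'M[R]_(m, n), feas K s W ->
  exists l, in_Lambda W l /\ forall f, l f != 0 -> feas K s (detmx R f).
Proof.
move=> s0.
suff H : forall k (W : 'M[R]_(m, n)), (mu K W <= k)%N -> feas K s W ->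
  exists l, in_Lambda W l /\ forall f, l f != 0 -> feas K s (detmx R f).
  by move=> W; apply: (H (mu K W)).
elim=> [|k IH] W hk fW.
  case: (eqVneq (Fr W) finset.set0) => F0.
    have [f Wf] := @base_det _ _ _ K s W fW F0; have [l [lL lS]] := @det_decomp R _ _ f.
    by exists l; rewrite Wf; split => // g /lS ->; rewrite -Wf.
  have [E [nz [sE [rE cE]]]] := @findE _ _ _ K s W fW F0.
  have [a [_ [_ lt]]] := @LS _ _ _ K s W E s0 fW nz sE rE cE.
  by move: lt; rewrite ltnNge (leq_trans hk).
case: (eqVneq (Fr W) finset.set0) => F0.
  have [f Wf] := @base_det _ _ _ K s W fW F0; have [l [lL lS]] := @det_decomp R _ _ f.
  by exists l; rewrite Wf; split => // g /lS ->; rewrite -Wf.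
have [E [nz [sE [rE cE]]]] := @findE _ _ _ K s W fW F0.
have [a [ap [fa lta]]] := @LS _ _ _ K s W E s0 fW nz sE rE cE.
have nz' : exists i j, (- E) i j != 0.
  by case: nz => i [j h]; exists i, j; rewrite mxE oppr_eq0.
have sE' i j : (i, j) \notin Fr W -> (- E) i j = 0.
  by move=> h; rewrite mxE sE ?oppr0.
have rE' i : \sum_j (- E) i j = 0.
  by rewrite (eq_bigr (fun j => - E i j)) ?sumrN ?rE ?oppr0 // => j _; rewrite mxE.
have cE' j : j \in K -> colsum W j = 1 -> colsum (- E) j = 0.
  move=> jK c1; rewrite /colsum (eq_bigr (fun i => - E i j)) ?sumrN => [|i _].
    by have := cE j jK c1; rewrite /colsum => ->; rewrite oppr0.
  by rewrite mxE.
have [b [bp [fb ltb]]] := @LS _ _ _ K s W (- E) s0 fW nz' sE' rE' cE'.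
have [l1 [L1 S1]] := IH _ (leq_trans lta hk) fa.
have [l2 [L2 S2]] := IH _ (leq_trans ltb hk) fb.
have abp : 0 < a + b by rewrite addr_gt0.
have Weq : W = (b / (a + b)) *: (W + a *: E) + (a / (a + b)) *: (W + b *: - E).
  apply/matrixP => i j; rewrite !mxE; field; rewrite gt_eqF //.
have h1 : 0 <= b / (a + b) by rewrite divr_ge0 ?ltW.
have h2 : 0 <= a / (a + b) by rewrite divr_ge0 ?ltW.
have h3 : b / (a + b) + a / (a + b) = 1 by field; rewrite gt_eqF.
have L := @comb R m n (b / (a + b)) (a / (a + b)) _ _ l1 l2 h1 h2 h3 L1 L2.
rewrite -Weq in L.
exists [ffun f => b / (a + b) * l1 f + a / (a + b) * l2 f]; split => //.
move=> f; rewrite ffunE.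
case: (eqVneq (l1 f) 0) => [->|q _]; last exact: S1.
case: (eqVneq (l2 f) 0) => [->|q _]; last exact: S2.
by rewrite !mulr0 addr0 eqxx.
Qed.

Lemma PQ {R : realType} {m n : nat} {W : 'M[R]_(m, n)} {l} {r : nat} : in_Lambda W l ->
  P_lambda l r + \sum_(f | \rank (detmx R f) != r) l f = 1.
Proof. by case=> _ [s1 _]; rewrite /P_lambda -s1 [RHS](bigID (fun f => \rank (detmx R f) == r)). Qed.

Lemma P_le1 {R : realType} {m n : nat} (W : 'M[R]_(m, n)) l r : in_Lambda W l ->
  P_lambda l r <= 1.
Proof.
move=> L; have := @PQ _ _ _ W l r L; have [l0 _] := L.
have : 0 <= \sum_(f | \rank (detmx R f) != r) l f by apply: sumr_ge0.
lra.
Qed.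

Lemma colsum_L {R : realType} {m n : nat} (W : 'M[R]_(m, n)) l j : in_Lambda W l ->
  colsum W j = \sum_f l f * colsum (detmx R f) j.
Proof.
case=> _ [_ e]; rewrite /colsum e.
under eq_bigr do rewrite summxE.
rewrite exchange_big /=; apply: eq_bigr => f _; rewrite mulr_sumr.
by apply: eq_bigr => i _; rewrite !mxE.
Qed.

Lemma entry_L {R : realType} {m n : nat} (W : 'M[R]_(m, n)) l i j : in_Lambda W l ->
  W i j = \sum_f l f * (f i == j)%:R.
Proof.
case=> _ [_ e]; rewrite e summxE; apply: eq_bigr => f _; by rewrite !mxE.
Qed.

Lemma Pbar_le {R : realType} {m n : nat} (W : 'M[R]_(m, n)) r x :
  (exists l, in_Lambda W l) -> (forall l, in_Lambda W l -> P_lambda l r <= x) ->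
  Pbar W r <= x.
Proof.
move=> [l L] H; apply: ge_sup; first by exists (P_lambda l r), l.
by move=> y [l' [L' ->]]; apply: H.
Qed.

Lemma Pbar_eq1 {R : realType} {m n : nat} (W : 'M[R]_(m, n)) r :
  (exists l, in_Lambda W l /\ P_lambda l r = 1) -> Pbar W r = 1.
Proof.
move=> [l [L P1]]; apply/eqP; rewrite eq_le; apply/andP; split.
  by apply: Pbar_le; [exists l | move=> l'; apply: P_le1].
have hs : has_ubound [set x | exists l, in_Lambda W l /\ x = P_lambda l r].
  by exists 1 => y [l' [L' ->]]; apply: P_le1 L'.
by apply: (ub_le_sup hs); exists l; rewrite P1.
Qed.

Lemma fib_le1 {R : realType} {m n : nat} (f : {ffun 'I_m -> 'I_n}) j :
  injective f -> colsum (detmx R f) j <= 1.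
Proof.
move=> inj; rewrite /colsum.
case: (boolP [exists i, f i == j]) => [/existsP [i0 /eqP fi0]|].
  rewrite (bigD1 i0) //= big1 => [|i ii0]; first by rewrite mxE fi0 eqxx addr0.
  rewrite mxE; case: (eqVneq (f i) j) => // fij.
  by move: ii0; rewrite (inj _ _ (etrans fij (esym fi0))) eqxx.
rewrite negb_exists => /forallP H; rewrite big1 ?ler01 // => i _.
by rewrite mxE (negbTE (H i)).
Qed.

Lemma fib_ge1 {R : realType} {m n : nat} (f : {ffun 'I_m -> 'I_n}) j :
  (exists i, f i = j) -> 1 <= colsum (detmx R f) j.
Proof.
case=> i0 fi0; rewrite /colsum (bigD1 i0) //= mxE fi0 eqxx lerDl.
by apply: sumr_ge0 => i _; rewrite mxE ler0n.
Qed.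

Lemma inj_of_fib {R : realType} {m n : nat} (f : {ffun 'I_m -> 'I_n}) :
  (forall j, colsum (detmx R f) j <= 1) -> injective f.
Proof.
move=> H i i' e; apply/eqP; apply: contraT => ne.
have nn k : 0 <= (detmx R f) k (f i) by rewrite mxE ler0n.
have := @sum_ge2 R _ (fun k => (detmx R f) k (f i)) i i' nn ne.
rewrite /= !mxE e eqxx => h.
have h2 := H (f i'); rewrite /colsum in h2.
have h3 := le_trans h h2; move: h3; rewrite /= mulr1n => h3; clear -h3; lra.
Qed.

Lemma surj_of_fib {R : realType} {m n : nat} (f : {ffun 'I_m -> 'I_n}) :
  (forall j, 1 <= colsum (detmx R f) j) -> forall j, exists i, f i = j.
Proof.
move=> H j; case: (boolP [exists i, f i == j]) => [/existsP [i /eqP]|]; first by exists i.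
rewrite negb_exists => /forallP nf.
have := H j; rewrite /colsum big1 => [|i _]; first by rewrite ler10.
by rewrite mxE (negbTE (nf i)).
Qed.

Lemma colweightE {R : realType} {m n : nat} (W : 'M[R]_(m, n)) j :
  (colweight W j)%:R = \sum_i ((W i j != 0) : nat)%:R :> R.
Proof.
rewrite /colweight -sum1_card natr_sum big_mkcond /=; apply: eq_bigr => i _.
have -> : (i \in [set i | W i j != 0]%classic) = (W i j != 0).
  by apply/idP/idP => [/set_mem|/mem_set].
by case: (W i j != 0).
Qed.

Lemma ub_i {R : realType} {m n : nat} (W : 'M[R]_(m, n)) l :
  in_Lambda W l -> beta W <= 1 - P_lambda l m.
Proof.
move=> L; have [l0 [s1 e]] := L.
have P1 := @P_le1 _ _ _ W l m L.
have hPQ := @PQ _ _ _ W l m L.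
set P := P_lambda l m in P1 hPQ *.
set Q := \sum_(f | _) _ in hPQ.
rewrite /beta; apply: bigmax_le => [|j _]; first by lra.
rewrite /beta'; case: ifP => [w1|_]; last by lra.
set w := colweight W j.
have gw f : l f != 0 -> colsum (detmx R f) j <= w%:R.
  move=> lf; rewrite /colsum /w colweightE; apply: ler_sum => i _.
  rewrite mxE; case: (eqVneq (f i) j) => [fij|_]; last by rewrite ler0n.
  have lpos : 0 < l f by rewrite lt_def lf l0.
  have : l f <= W i j.
    rewrite (@entry_L _ _ _ W l i j L) (bigD1 f) //= fij eqxx mulr1 lerDl.
    by apply: sumr_ge0 => g _; rewrite mulr_ge0 ?ler0n.
  by move=> h; rewrite gt_eqF ?(lt_le_trans lpos h).
have key : colsum W j <= P + w%:R * Q.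
  rewrite (@colsum_L _ _ _ W l j L) (bigID (fun f => \rank (detmx R f) == m)) /=.
  apply: lerD.
    rewrite /P /P_lambda; apply: ler_sum => f /eqP rk.
    rewrite -[X in _ <= X]mulr1; apply: ler_wpM2l => //; apply: fib_le1.
    exact: (@rank_m_inj R _ _ f rk).
  rewrite /Q mulr_sumr; apply: ler_sum => f _.
  case: (eqVneq (l f) 0) => [->|lf]; first by rewrite !mulr0 mul0r.
  by rewrite mulrC; apply: ler_wpM2r => //; apply: gw.
have w1' : (1 : R) < w%:R by rewrite ltr1n.
rewrite ler_pdivrMr ?subr_gt0 //.
have hQ : Q = 1 - P by lra.
move: key; rewrite hQ => key; nra.
Qed.

Lemma ub_ii {R : realType} {m n : nat} (W : 'M[R]_(m, n)) l :
  in_Lambda W l -> P_lambda l n <= hval W.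
Proof.
move=> L; have [l0 _] := L.
rewrite /hval; apply: le_bigmin => [|j _]; first exact: P_le1 L.
rewrite (@colsum_L _ _ _ W l j L) [X in _ <= X](bigID (fun f => \rank (detmx R f) == n)) /=.
apply: le_trans (_ : \sum_(f | \rank (detmx R f) == n) l f * colsum (detmx R f) j <= _).
  rewrite /P_lambda; apply: ler_sum => f /eqP rk.
  rewrite -[X in X <= _]mulr1; apply: ler_wpM2l => //; apply: fib_ge1.
  exact: (@rank_n_surj R _ _ f rk j).
rewrite lerDl; apply: sumr_ge0 => f _; apply: mulr_ge0 => //.
by apply: sumr_ge0 => i _; rewrite mxE ler0n.
Qed.

Theorem proposition9 (R : realType) (m n : nat) (W : 'M[R]_(m, n)) :
  (2 <= m)%N -> (2 <= n)%N -> channel W ->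
  ((m <= n)%N -> Pbar W m <= 1 - beta W /\ (beta W = 0 -> Pbar W m = 1)) /\
  ((n <= m)%N -> Pbar W n <= hval W /\ (hval W = 1 -> Pbar W n = 1)).
Proof.
move=> hm hn [W0 Wr].
have fW0 : feas finset.set0 1 W.
  by split => //; split => // j; rewrite finset.in_set0.
have ne : exists l, in_Lambda W l.
  by have [l [L _]] := @DEC R m n finset.set0 1 (oner_neq0 _) W fW0; exists l.
split => _.
  split.
    by apply: Pbar_le => // l L; have := @ub_i _ _ _ W l L; lra.
  move=> b0.
  have fW1 : feas [set: 'I_n] 1 W.
    split => //; split => // j _; rewrite mul1r subr_le0.
    have bj : beta' W j <= 0 by rewrite -b0 /beta; apply: le_bigmax.
    move: bj; rewrite /beta'; case: ifP => [w1|w1] bj.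
      by rewrite ler_pdivrMr ?subr_gt0 ?ltr1n // mul0r subr_le0 in bj.
    case: (boolP [exists i, W i j != 0]) => [/existsP [i0 nz]|].
      rewrite /colsum (bigD1 i0) //= big1 ?addr0; first exact: (@feas_le1 _ _ _ _ _ W i0 j fW0).
      move=> i ii0; apply/eqP; apply: contraFT w1 => nzi.
      have : (#|[set i; i0]| <= colweight W j)%N.
        apply: subset_leq_card; apply/fintype.subsetP => k.
        by rewrite !inE => /orP [/eqP->|/eqP->]; [exact: nzi | exact: nz].
      by rewrite cards2 ii0.
    rewrite negb_exists => /forallP H; rewrite /colsum big1 ?ler01 // => i _.
    by apply/eqP; move: (H i); rewrite negbK.
  have [l [L S]] := @DEC R m n [set: 'I_n] 1 (oner_neq0 _) W fW1.
  apply: Pbar_eq1; exists l; split => //.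
  have := @PQ _ _ _ W l m L; rewrite big1 ?addr0 // => f rk.
  apply/eqP; apply: contraTT rk => lf; rewrite negbK; apply/eqP.
  apply: inj_rank_m; apply: (@inj_of_fib R) => j.
  have [_ [_ H]] := S f lf; have := H j (finset.in_setT j); rewrite mul1r subr_le0.
  by [].
split.
  by apply: Pbar_le => // l L; exact: (@ub_ii _ _ _ W l L).
move=> h1.
have fW2 : feas [set: 'I_n] (-1) W.
  split => //; split => // j _.
  have : hval W <= colsum W j by apply: bigmin_le.
  rewrite h1 => h; lra.
have s0 : (-1 : R) != 0 by rewrite oppr_eq0 oner_eq0.
have [l [L S]] := @DEC R m n [set: 'I_n] (-1) s0 W fW2.
apply: Pbar_eq1; exists l; split => //.
have := @PQ _ _ _ W l n L; rewrite big1 ?addr0 // => f rk.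
apply/eqP; apply: contraTT rk => lf; rewrite negbK; apply/eqP.
apply: surj_rank_n; apply: (@surj_of_fib R) => j.
have [_ [_ H]] := S f lf; have := H j (finset.in_setT j); lra.
Qed.
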